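(* Let $m\in\mathbb{N}$ be odd and divisible by $3$. Then the friendship graph $F_j$ is $\mathbb{Z}_m$-cordial for every integer $j$ with $\frac{2m}{3}\le j\le m$.
   Context: Graphs are finite, simple and undirected. For $n\in\mathbb{N}$, the friendship graph $F_n$ is the union of $n$ copies of the triangle $C_3$ joined at a single common (central) vertex. For an abelian group $A$ and a graph $G=(V,E)$, a vertex labeling $\ell:V\to A$ induces an edge labeling $\ell(\{v_1,v_2\})=\ell(v_1)+\ell(v_2)$. Let $f_V(a)=|\{v\in V:\ell(v)=a\}|$ and $f_E(a)=|\{e\in E:\ell(e)=a\}|$. The labeling is $A$-cordial if $|f_V(a_1)-f_V(a_2)|\le 1$ and $|f_E(a_1)-f_E(a_2)|\le 1$ for all $a_1,a_2\in A$; $G$ is $A$-cordial if it admits an $A$-cordial labeling. *)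

(* Defs.v *)
From mathcomp Require Import all_boot all_order all_algebra.
Set Implicit Arguments. Unset Strict Implicit. Unset Printing Implicit Defensive.

Definition simple_graph (V : finType) (adj : rel V) : Prop :=
  symmetric adj /\ irreflexive adj.

Definition edges (V : finType) (adj : rel V) : {set {set V}} :=
  [set E : {set V} | [exists u, exists v, adj u v && (E == [set u; v])]].

(* Friendship graph F_n: vertices 0..2n, vertex 0 central, triangles
   {0, 2i+1, 2i+2} for i < n. *)
Definition friendship_adj (n : nat) : rel 'I_(2 * n).+1 :=
  fun u v => (u != v) &&
    [|| (nat_of_ord u == 0%N), (nat_of_ord v == 0%N) |
        ((0 < u)%N && (0 < v)%N && ((u.-1)./2 == (v.-1)./2))].

Section Cordial.
Variables (A : finZmodType) (V : finType) (adj : rel V).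

Definition vcount (l : V -> A) (a : A) : nat := #|[set v | l v == a]|.

Definition edge_label (l : V -> A) (e : {set V}) (a : A) : bool :=
  [exists u, exists v, (e == [set u; v]) && (u != v) && ((l u + l v)%R == a)].

Definition ecount (l : V -> A) (a : A) : nat :=
  #|[set e in edges adj | edge_label l e a]|.

Definition cordial_labeling (l : V -> A) : Prop :=
  forall a1 a2 : A,
    (vcount l a1 <= (vcount l a2).+1)%N /\ (ecount l a1 <= (ecount l a2).+1)%N.

Definition cordial : Prop := exists l : V -> A, cordial_labeling l.
End Cordial.

(* Main.v *)
Require Import Defs.
From mathcomp Require Import all_boot all_order all_algebra.
From mathcomp Require Import zify.


Lemma count_iota3 N (c1 c2 c3 : bool) (u1 u2 u3 : nat) :
  (c1 -> c2 -> u1 != u2) -> (c1 -> c3 -> u1 != u3) -> (c2 -> c3 -> u2 != u3) ->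
  count (fun x => [|| c1 && (x == u1), c2 && (x == u2) | c3 && (x == u3)]) (iota 0 N)
  = (c1 && (u1 < N)) + (c2 && (u2 < N)) + (c3 && (u3 < N)).
Proof.
move=> h12 h13 h23; elim: N => [|N IH]; first by rewrite !ltn0 !andbF.
rewrite -addn1 iotaD count_cat IH /= addn0 add0n.
move: IH; case: c1 c2 c3 h12 h13 h23 => [] [] [] /= h12 h13 h23 IH.
all: try (have {}h12 := h12 isT isT); try (have {}h13 := h13 isT isT); try (have {}h23 := h23 isT isT).
all: lia.
Qed.

Lemma count_iota3' N (P : pred nat) (c1 c2 c3 : bool) (u1 u2 u3 : nat) :
  (forall x, x < N -> P x = [|| c1 && (x == u1), c2 && (x == u2) | c3 && (x == u3)]) ->
  (c1 -> c2 -> u1 != u2) -> (c1 -> c3 -> u1 != u3) -> (c2 -> c3 -> u2 != u3) ->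
  count P (iota 0 N) = (c1 && (u1 < N)) + (c2 && (u2 < N)) + (c3 && (u3 < N)).
Proof.
move=> hP h12 h13 h23; rewrite -count_iota3 //; apply: eq_in_count => x.
by rewrite mem_iota add0n => /andP[_ /hP].
Qed.

Definition aE (k t i : nat) : nat :=
  if i < 2 * k then 3 * (i %/ 2) + 2 * (i %% 2) else 3 * (i - 2 * k + t) + 1.
Definition inS (m t x : nat) : bool := (x < m) && ((x %% 3 != 1) || (t <= x %/ 3)).
Definition Xf (m k t x : nat) : nat := if (t == k) && (x == 0) then m.-1 else x.
Definition Yf (m t x : nat) : nat := if x == m.-1 then (if t == 0 then 0 else 1) else x.+1.

Lemma aE_perm m k t : m = 3 * k -> t <= k ->
  perm_eq (map (aE k t) (iota 0 (m - t))) (filter (inS m t) (iota 0 m)).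
Proof.
move=> hm htk; apply: uniq_perm.
- rewrite map_inj_in_uniq ?iota_uniq // => i i'; rewrite !mem_iota /aE => hi hi'.
  case: ifP; case: ifP; lia.
- by rewrite filter_uniq ?iota_uniq.
move=> x; rewrite mem_filter mem_iota; apply/mapP/idP.
- case=> i; rewrite mem_iota /aE /inS => hi ->; case: ifP; lia.
- rewrite /inS => hx.
  exists (if x %% 3 == 1 then 2 * k + x %/ 3 - t else 2 * (x %/ 3) + (x %% 3 == 2)).
  + rewrite mem_iota; case: ifP; lia.
  + rewrite /aE; case h1: (x %% 3 == 1); case h2: (x %% 3 == 2); case: ifP; lia.
Qed.

Lemma count_aE m k t (P : pred nat) : m = 3 * k -> t <= k ->
  count (fun i => P (aE k t i)) (iota 0 (m - t)) = count (fun x => inS m t x && P x) (iota 0 m).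
Proof.
move=> hm htk.
transitivity (count P (map (aE k t) (iota 0 (m - t)))); first by rewrite count_map.
rewrite (permP (@aE_perm m k t hm htk)) count_filter; apply: eq_count => x /=; exact: andbC.
Qed.
Lemma inS_m1 m k t : m = 3 * k -> 0 < k -> inS m t m.-1.
Proof. move=> hm hk; rewrite /inS; apply/andP; split; first lia. apply/orP; left; lia. Qed.
Lemma inS_0 m k t : m = 3 * k -> 0 < k -> inS m t 0.
Proof. move=> hm hk; rewrite /inS; apply/andP; split; first lia. apply/orP; left; lia. Qed.

Lemma modn2 y m : y < 2 * m -> y %% m = if y < m then y else y - m.
Proof.
case: ifP => h hy; first by rewrite modn_small.
have -> : y = (y - m) + m by lia.
by rewrite modnDr modn_small; lia.
Qed.

Lemma cZ_eq m k t n w : m = 3 * k -> odd k -> t <= k -> n < m -> w < m ->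
  (2 * w + 1 = n \/ 2 * w + 1 = n + m) ->
  count (fun x => inS m t x && ((Xf m k t x + Yf m t x) %% m == n)) (iota 0 m)
  = (inS m t w && ~~((t == k) && (w == 0)) && ~~((w == m.-1) && (t != 0)))
    + ((t == k) && (n == 0)) + ((t != 0) && (n == 0)).
Proof.
move=> hm hk htk hn hw hw2.
have [p hp] : exists p, k = p.*2.+1 by exists k./2; rewrite -{1}(odd_double_half k) hk.
have k1 : 0 < k by lia.
rewrite (@count_iota3' m _ (inS m t w && ~~((t == k) && (w == 0)) && ~~((w == m.-1) && (t != 0)))
   ((t == k) && (n == 0)) ((t != 0) && (n == 0)) w 0 m.-1).
- have h1 : 0 < m by lia.
  have h2 : m.-1 < m by lia.
  by rewrite hw h1 h2 !andbT.
- move=> x hx; rewrite /Xf /Yf.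
  case: (boolP ((t == k) && (x == 0))) => h1.
  + case/andP: h1 => /eqP tk /eqP x0; subst x t.
    rewrite (_ : 0 == m.-1 = false); last by lia.
    rewrite (_ : m.-1 + 1 = m); last by lia.
    rewrite modnn (@inS_0 m k k) // eqxx /= !andbT andbF orbF.
    case: (eqVneq w 0) => [->|w0] /=; first by rewrite andbF.
    by rewrite andbF eq_sym.
  + case: (eqVneq x m.-1) => [xm|xm].
    * subst x; rewrite (@inS_m1 m k t) //= (_ : m.-1 == 0 = false); last by lia.
      rewrite !andbT andbF /=.
      case: (eqVneq t 0) => [t0|t0] /=.
      - rewrite t0 /= addn0 modn_small; last by lia.
        rewrite (_ : (0 == k) = false); last by lia.
        rewrite !andbF /= orbF.
        have -> : inS m 0 w by rewrite /inS; apply/andP; split; [lia|apply/orP; right; lia].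
        rewrite /=.
        by apply/idP/idP => /eqP h; apply/eqP; lia.
      - rewrite (_ : m.-1 + 1 = m); last by lia.
        rewrite modnn.
        case: (eqVneq w m.-1) => [->|wm] /=; first by rewrite !andbF eq_sym.
        by rewrite !andbF /= eq_sym.
    * rewrite /= !andbF !orbF.
      rewrite (_ : x + x.+1 = 2 * x + 1); last by lia.
      rewrite modn2; last by lia.
      have c2f : ((t == k) && (n == 0)) && (x == 0) = false.
        apply/negbTE; apply/negP => /andP[/andP[/eqP a _] /eqP b]; move: h1; rewrite a b !eqxx.
        by [].
      rewrite c2f orbF.
      case: (eqVneq x w) => [xw|xw].
      - subst x; rewrite andbT.
        have -> : ((if 2 * w + 1 < m then 2 * w + 1 else 2 * w + 1 - m) == n) = true.
          by case: ifP => ?; apply/eqP; lia.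
        rewrite h1 (negbTE xm) /= !andbT.
        by [].

      - rewrite andbF; apply/negbTE; apply/negP => /andP[_].
        by case: ifP => ? /eqP hh; move/eqP: xw; apply; lia.
- move=> /andP[/andP[_ a] _] /andP[b _]; rewrite b /= in a; apply/eqP => e; subst w; by rewrite eqxx in a.
- move=> /andP[/andP[_ _] a] /andP[b _]; rewrite b /= andbT in a; exact: a.
- move=> _ _; lia.
Qed.
Lemma cX_eq m k t n : m = 3 * k -> 0 < k -> t <= k -> n < m ->
  count (fun x => inS m t x && (Xf m k t x == n)) (iota 0 m)
  = (inS m t n && ~~((t == k) && (n == 0))) + ((t == k) && (n == m.-1)).
Proof.
move=> hm hk htk hn.
rewrite (@count_iota3' m _ (inS m t n && ~~((t == k) && (n == 0))) ((t == k) && (n == m.-1)) false n 0 0).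
- by rewrite hn /= (_ : 0 < m) ?andbT ?addn0 //; lia.
- move=> x hx; rewrite /Xf /inS; case: ifP => h; apply/idP/idP; lia.
- lia.
- by [].
- by [].
Qed.
Lemma cY_eq m k t n : m = 3 * k -> 0 < k -> t <= k -> n < m ->
  count (fun x => inS m t x && (Yf m t x == n)) (iota 0 m)
  = ((0 < n) && inS m t n.-1) + (((t == 0) && (n == 0)) || ((t != 0) && (n == 1))).
Proof.
move=> hm hk htk hn.
rewrite (@count_iota3' m _ ((0 < n) && inS m t n.-1) (((t == 0) && (n == 0)) || ((t != 0) && (n == 1))) false n.-1 m.-1 0).
- have h1 : n.-1 < m by lia.
  have h2 : m.-1 < m by lia.
  by rewrite h1 h2 !andbT addn0.
- move=> x hx; rewrite /Yf; case: (eqVneq x m.-1) => [->|xm].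
  + rewrite (@inS_m1 m k t) // (_ : m.-1 == n.-1 = false) ?andbF /=; last by lia.
    rewrite andbT orbF; case: (t == 0) => /=; by rewrite eq_sym ?orbF.
  + rewrite /= orbF andbF orbF.
    case: (eqVneq x.+1 n) => [<-|xn] /=; first by rewrite !eqxx !andbT.
    rewrite andbF; apply/esym/negbTE; apply/negP => /andP[/andP[h1 _] /eqP h2].
    by move/eqP: xn; apply; lia.
- lia.
- by [].
- by [].
Qed.
Lemma final_lia (m k t n r : nat) (A B C : bool) : m = 3 * k -> 0 < k -> t <= k -> n < m -> r < 3 ->
  (n == 0) ==> (r == 0) -> (n == 1) ==> (r == 1) -> (n == m.-1) ==> (r == 2) ->
  (n == 1) ==> (A == (t == 0)) -> (n == m.-1) ==> (B == (t != k)) -> (t == 0) ==> [&& A, B & C] ->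
  let cX := ((r != 1) || A) && ~~((t==k)&&(n==0)) + ((t==k) && (n == m.-1)) in
  let cY := ((0 < n) && ((r != 2) || B)) + (((t==0) && (n==0)) || ((t!=0) && (n==1))) in
  let cZ := ((r != 0) || C) && ~~((t==k) && (n==1)) && ~~((n==m.-1) && (t!=0)) + ((t==k) && (n==0)) + ((t!=0) && (n==0)) in
  [/\ (if t == 0 then 2 else 1) <= (n==0) + cX + cY, (n==0) + cX + cY <= (if t == 0 then 2 else 1).+1,
      2 <= cX + cY + cZ & cX + cY + cZ <= 3].
Proof.
move=> hm hk htk hn hr h0 h1 hm1 hA hB hT cX cY cZ; rewrite /cX /cY /cZ {cX cY cZ}.
case: r hr h0 h1 hm1 => [|[|[|r]]] // hr h0 h1 hm1.
all: case E0: (n == 0) h0 => //= h0; case E1: (n == 1) h1 hA => //= h1 hA;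
  case Em: (n == m.-1) hm1 hB => //= hm1 hB;
  case Tz: (t == 0) hT => /= hT; case Tk: (t == k); case: A hA hT => hA hT; case: B hB hT => hB hT; case: C hT => /= hT.
all: try by [].
all: split; lia.
Qed.


Lemma VE_bounds m k t n : m = 3 * k -> odd k -> t <= k -> n < m ->
  let cX := count (fun x => inS m t x && (Xf m k t x == n)) (iota 0 m) in
  let cY := count (fun x => inS m t x && (Yf m t x == n)) (iota 0 m) in
  let cZ := count (fun x => inS m t x && ((Xf m k t x + Yf m t x) %% m == n)) (iota 0 m) in
  [/\ (if t == 0 then 2 else 1) <= (n==0) + cX + cY, (n==0) + cX + cY <= (if t == 0 then 2 else 1).+1,
      2 <= cX + cY + cZ & cX + cY + cZ <= 3].
Proof.
move=> hm hk htk hn cX cY cZ.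
have [p hp] : exists p, k = p.*2.+1 by exists k./2; rewrite -{1}(odd_double_half k) hk.
have k1 : 0 < k by lia.
pose w := if n %% 2 == 1 then n %/ 2 else (n + m) %/ 2.
have hw : w < m by rewrite /w; case: ifP; lia.
have hw2 : 2 * w + 1 = n \/ 2 * w + 1 = n + m.
  rewrite /w; case: ifP => h; lia.
have r3 : n %% 3 < 3 by lia.
have s1 : (n == 0) ==> (n %% 3 == 0) by apply/implyP => /eqP ->.
have s2 : (n == 1) ==> (n %% 3 == 1) by apply/implyP => /eqP ->.
have s3 : (n == m.-1) ==> (n %% 3 == 2) by apply/implyP => /eqP ->; clear -hm k1; lia.
have s4 : (n == 1) ==> ((t <= n %/ 3) == (t == 0)) by apply/implyP => /eqP ->; apply/eqP; clear; apply/idP/idP; lia.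
have s5 : (n == m.-1) ==> ((t <= n.-1 %/ 3) == (t != k)).
  apply/implyP => /eqP ->; apply/eqP; clear -hm k1 htk; apply/idP/idP; lia.
have s6 : (t == 0) ==> [&& t <= n %/ 3, t <= n.-1 %/ 3 & t <= w %/ 3] by apply/implyP => /eqP ->; rewrite !leq0n.
have H := @final_lia m k t n (n %% 3) (t <= n %/ 3) (t <= n.-1 %/ 3) (t <= w %/ 3) hm k1 htk hn r3 s1 s2 s3 s4 s5 s6.
rewrite /cX /cY /cZ (@cX_eq m k t n hm k1 htk hn) (@cY_eq m k t n hm k1 htk hn) (@cZ_eq m k t n w hm hk htk hn hw hw2).
have e1 : inS m t n = (n %% 3 != 1) || (t <= n %/ 3) by rewrite /inS hn.
have e2 : (0 < n) && inS m t n.-1 = (0 < n) && ((n %% 3 != 2) || (t <= n.-1 %/ 3)).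
  rewrite /inS; clear -hn; apply/idP/idP; lia.
have e3 : inS m t w && ~~((t == k) && (w == 0)) && ~~((w == m.-1) && (t != 0))
   = ((n %% 3 != 0) || (t <= w %/ 3)) && ~~((t == k) && (n == 1)) && ~~((n == m.-1) && (t != 0)).
  have -> : (w == 0) = (n == 1) by clear -hw2 hn hm hp; apply/idP/idP; lia.
  have -> : (w == m.-1) = (n == m.-1) by clear -hw2 hn hm hp; apply/idP/idP; lia.
  congr (_ && _ && _); rewrite /inS hw /=; clear -hw2 hm hn; apply/idP/idP; lia.
rewrite e1 e2 e3.
exact: H.
Qed.

Import GRing.Theory.

Definition lab (A : zmodType) (X Y : nat -> A) (u : nat) : A :=
  if u == 0 then 0%R else if u %% 2 == 1 then X (u %/ 2) else Y (u %/ 2 - 1).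
Arguments lab {A}.

Lemma sum_ord_count N (P : pred nat) : \sum_(i < N) (P i : nat) = count P (iota 0 N).
Proof.
rewrite -(big_mkord xpredT (fun i => (P i : nat))).
transitivity (\sum_(0 <= i < N | P i) 1).
  by rewrite [RHS]big_mkcond /=; apply: eq_bigr => i _; case: (P i).
by rewrite sum1_count /index_iota subn0.
Qed.

Lemma card_set_sum (T : finType) (P : pred T) : #|[set x | P x]| = \sum_(x : T) (P x : nat).
Proof.
rewrite -sum1_card big_mkcond /=; apply: eq_bigr => x _; rewrite inE; by case: (P x).
Qed.

Lemma card_ord_count N (P : pred nat) : #|[set x : 'I_N | P x]| = count P (iota 0 N).
Proof. by rewrite card_set_sum sum_ord_count. Qed.

Lemma count_lab (A : zmodType) (X Y : nat -> A) (b : A) j :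
  count (fun u => lab X Y u.+1 == b) (iota 0 (2 * j))
  = count (fun i => X i == b) (iota 0 j) + count (fun i => Y i == b) (iota 0 j).
Proof.
elim: j => [|j IH] //.
have e1 : iota 0 (2 * j.+1) = iota 0 (2 * j) ++ [:: 2 * j; (2 * j).+1].
  by rewrite (_ : 2 * j.+1 = 2 * j + 2) ?iotaD //; lia.
have e2 : iota 0 j.+1 = iota 0 j ++ [:: j] by rewrite -addn1 iotaD.
rewrite e1 e2 !count_cat IH /= !addn0.
rewrite /lab /=.
rewrite (_ : (2 * j).+1 %% 2 == 1 = true); last by apply/eqP; lia.
rewrite (_ : (2 * j).+1 %/ 2 = j); last by lia.
rewrite (_ : (2 * j).+2 %% 2 == 1 = false); last by apply/negbTE; apply/eqP; lia.
rewrite (_ : (2 * j).+2 %/ 2 - 1 = j); last by lia.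
lia.
Qed.

Lemma vcount_lab (A : finZmodType) j (X Y : nat -> A) (b : A) :
  vcount (fun v : 'I_(2 * j).+1 => lab X Y v) b
  = (0%R == b) + count (fun i => X i == b) (iota 0 j) + count (fun i => Y i == b) (iota 0 j).
Proof.
rewrite /vcount (card_ord_count (2 * j).+1 (fun u => lab X Y u == b)).
have -> : iota 0 (2 * j).+1 = 0 :: map (addn 1) (iota 0 (2 * j)) by rewrite /= -iotaDl.
rewrite /= count_map -addnA -count_lab.
by rewrite {1}/lab eqxx.
Qed.

Lemma lab0 (A : zmodType) (X Y : nat -> A) : lab X Y 0 = 0%R.
Proof. by rewrite /lab eqxx. Qed.

Lemma set2_eq (T : finType) (x y u v : T) : [set x; y] = [set u; v] ->
  (x = u /\ y = v) \/ (x = v /\ y = u).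
Proof.
move=> e.
have hx : x \in [set u; v] by rewrite -e !inE eqxx.
have hy : y \in [set u; v] by rewrite -e !inE eqxx orbT.
have hu : u \in [set x; y] by rewrite e !inE eqxx.
have hv : v \in [set x; y] by rewrite e !inE eqxx orbT.
move: hx hy hu hv; rewrite !inE => /orP[] /eqP hx /orP[] /eqP hy /orP[] /eqP hu /orP[] /eqP hv; subst; auto.
Qed.


Definition adjn (x y : nat) : bool :=
  (x != y) && [|| x == 0, y == 0 | (0 < x) && (0 < y) && (x.-1 %/ 2 == y.-1 %/ 2)].

Lemma adjE j (u v : 'I_(2 * j).+1) : friendship_adj u v = adjn u v.
Proof. by rewrite /friendship_adj /adjn -!divn2. Qed.

Lemma count_lab2 (A : zmodType) (X Y : nat -> A) (b : A) j :
  count (fun u => (u.+1 %% 2 == 1) && ((lab X Y u.+1 + lab X Y u.+2)%R == b)) (iota 0 (2 * j))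
  = count (fun i => (X i + Y i)%R == b) (iota 0 j).
Proof.
elim: j => [|j IH] //.
have e1 : iota 0 (2 * j.+1) = iota 0 (2 * j) ++ [:: 2 * j; (2 * j).+1].
  by rewrite (_ : 2 * j.+1 = 2 * j + 2) ?iotaD //; lia.
have e2 : iota 0 j.+1 = iota 0 j ++ [:: j] by rewrite -addn1 iotaD.
rewrite e1 e2 !count_cat IH /= !addn0.
rewrite /lab /=.
rewrite (_ : (2 * j).+1 %% 2 == 1 = true); last by apply/eqP; lia.
rewrite (_ : (2 * j).+1 %/ 2 = j); last by lia.
rewrite (_ : (2 * j).+2 %% 2 == 1 = false); last by apply/negbTE; apply/eqP; lia.
rewrite (_ : (2 * j).+2 %/ 2 - 1 = j); last by lia.
by rewrite /= addn0.
Qed.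

Lemma adj_sym j (u v : 'I_(2 * j).+1) : friendship_adj u v = friendship_adj v u.
Proof. rewrite !adjE /adjn; apply/idP/idP; lia. Qed.

Lemma ecount_lab (A : finZmodType) j (X Y : nat -> A) (b : A) :
  ecount (@friendship_adj j) (fun v : 'I_(2 * j).+1 => lab X Y v) b
  = count (fun i => X i == b) (iota 0 j) + count (fun i => Y i == b) (iota 0 j)
    + count (fun i => (X i + Y i)%R == b) (iota 0 j).
Proof.
set l := fun v : 'I_(2 * j).+1 => lab X Y v.
pose Q := fun p : 'I_(2 * j).+1 * 'I_(2 * j).+1 => ((p.1 < p.2)%N && friendship_adj p.1 p.2 && ((l p.1 + l p.2)%R == b)).
rewrite /ecount.
have -> : [set e in edges (@friendship_adj j) | edge_label l e b]
          = (fun p : 'I_(2 * j).+1 * 'I_(2 * j).+1 => [set p.1; p.2]) @: [set p | Q p].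
  apply/setP => e; rewrite inE; apply/andP/imsetP.
  - rewrite /edges /edge_label inE.
    case=> /existsP[u /existsP[v /andP[auv /eqP eE]]] /existsP[u' /existsP[v' /andP[/andP[/eqP eE' nuv] /eqP sE]]].
    have auv' : friendship_adj u' v'.
      by move: (eE); rewrite eE' => /set2_eq [[-> ->]|[-> ->]] //; rewrite adj_sym.
    case: (ltngtP u' v') => h.
    + by exists (u', v'); rewrite // inE /Q /= h auv' sE eqxx.
    + exists (v', u'); last by rewrite eE' /= setUC.
      by rewrite inE /Q /= h adj_sym auv' addrC sE eqxx.
    + by move: nuv; rewrite (val_inj h) eqxx.
  - case=> [[u v]]; rewrite inE /Q /= => /andP[/andP[huv auv] sE] ->; split.
    + by rewrite inE; apply/existsP; exists u; apply/existsP; exists v; rewrite auv eqxx.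
    + apply/existsP; exists u; apply/existsP; exists v; rewrite eqxx sE andbT /=.
      by rewrite -val_eqE /= neq_ltn huv.
rewrite card_in_imset; last first.
  move=> [u v] [u' v']; rewrite !inE /Q /= => /andP[/andP[h _] _] /andP[/andP[h' _] _].
  move/set2_eq => [[-> ->] //|[e1 e2]]; subst; lia.
pose q := fun x y : nat => (x < y) && adjn x y && ((lab X Y x + lab X Y y)%R == b).
rewrite card_set_sum.
transitivity (\sum_(u : 'I_(2 * j).+1) \sum_(v : 'I_(2 * j).+1) (q u v : nat)).
  rewrite pair_bigA; apply: eq_bigr => [[u v]] _.
  by rewrite /Q /q /= adjE.
under eq_bigr => u _ do rewrite (sum_ord_count (2 * j).+1 (q u)).
rewrite big_ord_recl.
have h0 : count (q 0) (iota 0 (2 * j).+1) = count (fun u => lab X Y u.+1 == b) (iota 0 (2 * j)).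
  have -> : iota 0 (2 * j).+1 = 0 :: map (addn 1) (iota 0 (2 * j)) by rewrite /= -iotaDl.
  rewrite /= count_map /q /= add0n; apply: eq_count => v /=.
  rewrite lab0 add0r add1n /adjn /=.
  by [].
have hS : forall i, i < 2 * j -> count (q i.+1) (iota 0 (2 * j).+1)
     = ((i.+1 %% 2 == 1) && ((lab X Y i.+1 + lab X Y i.+2)%R == b)).
  move=> i hi.
  rewrite (@count_iota3' (2 * j).+1 (q i.+1) ((i.+1 %% 2 == 1) && ((lab X Y i.+1 + lab X Y i.+2)%R == b)) false false i.+2 0 0) //.
  - have hc : (i.+1 %% 2 == 1) -> i.+2 < (2 * j).+1 by move=> h; lia.
    move: hc; case: (i.+1 %% 2 == 1) => //= hc; rewrite ?andbF ?addn0 //.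
    by rewrite (hc isT) andbT.
  - move=> v hv; rewrite /q !orbF.
    case: (eqVneq v i.+2) => [->|nv].
    + rewrite andbT; congr (_ && _); rewrite ltnSn /adjn /=; apply/idP/idP; lia.
    + rewrite andbF; apply/negbTE; apply/negP => /andP[/andP[h1 h2] _]; move: h2 nv; rewrite /adjn.
      move=> h2 /eqP; apply; lia.
rewrite h0.
under eq_bigr => i _ do rewrite lift0 (hS i (ltn_ord i)).
rewrite (sum_ord_count (2 * j) (fun i => (i.+1 %% 2 == 1) && ((lab X Y i.+1 + lab X Y i.+2)%R == b))).
by rewrite count_lab2 count_lab.
Qed.

Lemma valZ_add m (x y : 'Z_m) : val (x + y)%R = (val x + val y) %% (Zp_trunc m).+2.
Proof. by []. Qed.

Lemma valZ_inZp m x : val (inZp x : 'Z_m) = x %% (Zp_trunc m).+2.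
Proof. by []. Qed.

Lemma valZ0 m : val (0%R : 'Z_m) = 0.
Proof. by []. Qed.

Theorem theorem12p2 (m : nat) (hodd : odd m) (h3 : (3 %| m)%N) (j : nat) :
  (2 * m <= 3 * j)%N -> (j <= m)%N ->
  cordial ('Z_m : finZmodType) (@friendship_adj j).
Proof.
move=> h2m hjm.
set k := m %/ 3.
have hm : m = 3 * k by rewrite /k mulnC divnK.
have hk : odd k by move: hodd; rewrite hm oddM.
have k1 : 0 < k by case: k hk {hm}.
set t := m - j.
have htk : t <= k by rewrite /t; lia.
have hj : j = m - t by rewrite /t; lia.
have HM : (Zp_trunc m).+2 = m by apply: Zp_cast; lia.
pose X := fun i => (inZp (Xf m k t (aE k t i)) : 'Z_m).
pose Y := fun i => (inZp (Yf m t (aE k t i)) : 'Z_m).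
have aE_lt : forall i, i < j -> aE k t i < m.
  by move=> i hi; rewrite /aE; case: ifP; lia.
have Xf_lt : forall x, x < m -> Xf m k t x < m by move=> x hx; rewrite /Xf; case: ifP; lia.
have Yf_lt : forall x, x < m -> Yf m t x < m.
  by move=> x hx; rewrite /Yf; case: ifP => h; [case: ifP|]; lia.
pose lo := if t == 0 then 2 else 1.
pose l : 'I_(2 * j).+1 -> ('Z_m : finZmodType) := fun v => lab X Y v.
suff hb : forall b : 'Z_m,
    lo <= @vcount ('Z_m : finZmodType) _ l b <= lo.+1 /\
    2 <= @ecount ('Z_m : finZmodType) _ (@friendship_adj j) l b <= 3.
  exists l => a1 a2.
  have [/andP[g1 g2] /andP[g3 g4]] := hb a1.
  have [/andP[g5 g6] /andP[g7 g8]] := hb a2.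
  by split; [apply: (leq_trans g2); rewrite ltnS | apply: (leq_trans g4); rewrite ltnS].
move=> b.
set n := val b.
have hn : n < m by apply: (leq_trans (ltn_ord b)); rewrite HM.
have modM : forall x, x < m -> x %% (Zp_trunc m).+2 = x by move=> x hx; rewrite modn_small // HM.
have modM2 : forall x, x %% (Zp_trunc m).+2 = x %% m by move=> x; rewrite HM.
have eX : count (fun i => X i == b) (iota 0 j)
          = count (fun x => inS m t x && (Xf m k t x == n)) (iota 0 m).
  rewrite -(@count_aE m k t (fun x => Xf m k t x == n) hm htk) -hj.
  apply: eq_in_count => i; rewrite mem_iota => /andP[_ hi].
  by rewrite -val_eqE /= modM // Xf_lt // aE_lt.
have eY : count (fun i => Y i == b) (iota 0 j)
          = count (fun x => inS m t x && (Yf m t x == n)) (iota 0 m).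
  rewrite -(@count_aE m k t (fun x => Yf m t x == n) hm htk) -hj.
  apply: eq_in_count => i; rewrite mem_iota => /andP[_ hi].
  by rewrite -val_eqE /= modM // Yf_lt // aE_lt.
have eZ : count (fun i => (X i + Y i)%R == b) (iota 0 j)
          = count (fun x => inS m t x && ((Xf m k t x + Yf m t x) %% m == n)) (iota 0 m).
  rewrite -(@count_aE m k t (fun x => (Xf m k t x + Yf m t x) %% m == n) hm htk) -hj.
  apply: eq_in_count => i; rewrite mem_iota => /andP[_ hi].
  by rewrite -val_eqE /= modnDm modM2.
have e0 : (0%R == b) = (n == 0) by rewrite -val_eqE valZ0 eq_sym.
rewrite /l vcount_lab ecount_lab eX eY eZ e0.
have [v1 v2 v3 v4] := @VE_bounds m k t n hm hk htk hn.
by rewrite /lo v1 v2 v3 v4.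
Qed.
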